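(* Fix $\epsilon_2>0$ and $(u_\pm,v_\pm)$ with $v_\pm>0$ and $u_+<u_--2\epsilon_2$. For small $\epsilon_1>0$ let $(u^{\epsilon_1\epsilon_2},v^{\epsilon_1\epsilon_2})$ be the two-shock Riemann solution of the perturbed Brio system with data $(u_\pm,v_\pm)$. Then as $\epsilon_1\to0$, in the sense of distributions on $t>0$, $$u^{\epsilon_1\epsilon_2}\to u_-+(u_+-u_-)H(x-\sigma t),\qquad v^{\epsilon_1\epsilon_2}\to v_-+(v_+-v_-)H(x-\sigma t)+w^{\epsilon_2}(t)\delta_S,$$ with $\sigma=\tfrac12(u_-+u_+)$, $S=\{(t,\sigma t)\}$, $w^{\epsilon_2}(t)=\tfrac12\big(v_+(u_--u_++2\epsilon_2)-v_-(u_+-u_-+2\epsilon_2)\big)t$; this limit is the delta-shock solution of $u_t+(\tfrac12u^2)_x=0$, $v_t+(uv-\epsilon_2v)_x=0$ with these Riemann data, whose value of $u$ on the discontinuity is $u_\delta=\sigma+\epsilon_2$ (the limit of the intermediate velocity).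
   Context: Perturbed Brio system: $u_t+(\tfrac12u^2+\tfrac12\epsilon_1v^2)_x=0$, $v_t+(uv-\epsilon_2v)_x=0$, $\epsilon_1,\epsilon_2>0$, $v>0$, with Riemann data $(u_-,v_-)$ for $x<0$, $(u_+,v_+)$ for $x>0$. The two-shock solution is $(u_-,v_-)$ for $x/t<\sigma_1$, $(u_*,v_* )$ for $\sigma_1<x/t<\sigma_2$, $(u_+,v_+)$ for $x/t>\sigma_2$, where $v_*>\max(v_-,v_+)$, $u_+<u_*<u_-$, $$u_*=u_-+(v_*-v_-)\frac{\epsilon_2-\sqrt{\epsilon_2^2+4\epsilon_1(v_*+v_-)^2}}{v_*+v_-},\qquad u_+=u_*+(v_+-v_* )\frac{\epsilon_2+\sqrt{\epsilon_2^2+4\epsilon_1(v_*+v_+)^2}}{v_*+v_+},$$ $\sigma_1=u_-+\frac{v_*(u_*-u_-)}{v_*-v_-}-\epsilon_2$, $\sigma_2=u_++\frac{v_*(u_+-u_* )}{v_+-v_*}-\epsilon_2$. $H$ is the Heaviside function and $\langle w\delta_S,\phi\rangle=\int_0^\infty w(t)\phi(t,\sigma t)dt$. *)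

(* Defs.v *)
From Stdlib Require Import Reals.
Open Scope R_scope.

Definition cont2 (f : R -> R -> R) : Prop :=
  forall t x eps, 0 < eps -> exists del, 0 < del /\
    forall t' x', Rabs (t' - t) < del -> Rabs (x' - x) < del ->
      Rabs (f t' x' - f t x) < eps.

Fixpoint Ck (n : nat) (f : R -> R -> R) : Prop :=
  match n with
  | O => cont2 f
  | S m => cont2 f /\ exists ft fx : R -> R -> R,
      (forall t x, derivable_pt_lim (fun s => f s x) t (ft t x)) /\
      (forall t x, derivable_pt_lim (fun y => f t y) x (fx t x)) /\
      Ck m ft /\ Ck m fx
  end.

Definition smooth2 (f : R -> R -> R) : Prop := forall n, Ck n f.

Definition supported_in (phi : R -> R -> R) (a b c d : R) : Prop :=
  forall t x, ~ (a <= t <= b /\ c <= x <= d) -> phi t x = 0.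

Definition test_fn (phi : R -> R -> R) : Prop :=
  smooth2 phi /\ exists a b c d, 0 < a /\ a <= b /\ c <= d /\ supported_in phi a b c d.

Definition iint (f : R -> R -> R) (a b c d I : R) : Prop :=
  exists G : R -> R,
    (forall t, a <= t <= b ->
       exists pr : Riemann_integrable (f t) c d, RiemannInt pr = G t) /\
    exists pr : Riemann_integrable G a b, RiemannInt pr = I.

Definition H (y : R) : R := if Rlt_dec 0 y then 1 else 0.

Definition three_state (s1 s2 l m r : R) (t x : R) : R :=
  if Rlt_dec x (s1 * t) then l
  else if Rlt_dec (s2 * t) x then r else m.

(** The two-shock Riemann solution of the perturbed Brio system:
    intermediate state (us, vs) satisfying the conditions of the context. *)
Definition two_shock (e1 e2 um vm up vp us vs : R) : Prop :=
  Rmax vm vp < vs /\ up < us /\ us < um /\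
  us = um + (vs - vm) * (e2 - sqrt (e2 ^ 2 + 4 * e1 * (vs + vm) ^ 2)) / (vs + vm) /\
  up = us + (vp - vs) * (e2 + sqrt (e2 ^ 2 + 4 * e1 * (vs + vp) ^ 2)) / (vs + vp).

Definition sigma1 (e2 um vm us vs : R) : R :=
  um + vs * (us - um) / (vs - vm) - e2.
Definition sigma2 (e2 up vp us vs : R) : R :=
  up + vs * (up - us) / (vp - vs) - e2.

(** Convergence in D'({t>0}) as e1 -> 0+ of the family f e1 (defined for
    0 < e1 < e0) to the distribution  g + w(t) delta_{x = s t},
    tested against phi. *)
Definition dist_conv_at (e0 : R) (f : R -> R -> R -> R) (g : R -> R -> R)
    (w : R -> R) (s : R) (phi : R -> R -> R) : Prop :=
  forall a b c d, 0 < a -> a <= b -> c <= d -> supported_in phi a b c d ->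
    exists (I : R -> R) (J : R),
      (forall e1, 0 < e1 < e0 -> iint (fun t x => f e1 t x * phi t x) a b c d (I e1)) /\
      (exists K, iint (fun t x => g t x * phi t x) a b c d K /\
         exists pr : Riemann_integrable (fun t => w t * phi t (s * t)) a b,
           J = K + RiemannInt pr) /\
      (forall eps, 0 < eps -> exists del, 0 < del /\
         forall e1, 0 < e1 < Rmin del e0 -> Rabs (I e1 - J) < eps).

Definition dist_conv (e0 : R) (f : R -> R -> R -> R) (g : R -> R -> R)
    (w : R -> R) (s : R) : Prop :=
  forall phi, test_fn phi -> dist_conv_at e0 f g w s phi.

(* Main.v *)
Require Import Defs.
From Stdlib Require Import Reals Lra Psatz FunctionalExtensionality.
From Coquelicot Require Import Coquelicot.
Open Scope R_scope.

Lemma absle1 x y : Rabs x <= y -> - y <= x <= y.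
Proof. unfold Rabs; destruct (Rcase_abs x); intros; lra. Qed.
Lemma absle2 x y : - y <= x <= y -> Rabs x <= y.
Proof. unfold Rabs; destruct (Rcase_abs x); intros; lra. Qed.
Lemma abslt1 x y : Rabs x < y -> - y < x < y.
Proof. unfold Rabs; destruct (Rcase_abs x); intros; lra. Qed.
Lemma abslt2 x y : - y < x < y -> Rabs x < y.
Proof. unfold Rabs; destruct (Rcase_abs x); intros; lra. Qed.

Lemma cover (A B : R) (P : R -> R -> Prop) :
  A <= B ->
  (forall u v w, u <= v -> v <= w -> P u v -> P v w -> P u w) ->
  (forall x, A <= x <= B -> exists d, 0 < d /\
      forall u v, x - d < u <= x -> x <= v < x + d -> P u v) ->
  P A B.
Proof.
  intros HAB Hadd Hloc.
  set (E := fun y => A <= y <= B /\ P A y).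
  assert (HA : E A).
  { split; [lra|]. destruct (Hloc A) as [d [Hd Hd']]; [lra|]. apply Hd'; lra. }
  assert (Hb : bound E) by (exists B; intros y [Hy _]; lra).
  destruct (completeness E Hb (ex_intro _ A HA)) as [s [Hs1 Hs2]].
  assert (HsA : A <= s) by (apply Hs1; exact HA).
  assert (HsB : s <= B) by (apply Hs2; intros y [Hy _]; lra).
  destruct (Hloc s) as [d [Hd Hd']]; [lra|].
  assert (Hy : exists y, E y /\ s - d < y).
  { apply Classical_Prop.NNPP; intro Hn.
    assert (s <= s - d).
    { apply Hs2. intros y Ey. apply Rnot_lt_le. intro Hlt. apply Hn. exists y; auto. }
    lra. }
  destruct Hy as [y [[Hy1 Hy2] Hy3]].
  assert (Hys : y <= s) by (apply Hs1; split; auto).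
  set (v := Rmin B (s + d / 2)).
  assert (Hv : P A v).
  { apply Hadd with y; [lra| unfold v; apply Rmin_glb; lra | exact Hy2 |].
    apply Hd'; [lra|]. unfold v. split; [apply Rmin_glb; lra|].
    apply Rle_lt_trans with (s + d/2); [apply Rmin_r|lra]. }
  assert (HvE : E v).
  { split; [split; [unfold v; apply Rmin_glb; lra| apply Rmin_l]| exact Hv]. }
  assert (v <= s) by (apply Hs1; exact HvE).
  assert (v = B).
  { unfold v in *. destruct (Rle_dec B (s + d/2)) as [E1|E1]; [rewrite Rmin_left in * by lra | rewrite Rmin_right in * by lra]; lra. }
  rewrite <- H0. exact Hv.
Qed.

Lemma box_bound (f : R -> R -> R) : cont2 f ->
  forall A B L R0, A <= B -> L <= R0 -> exists M, forall t x, A <= t <= B -> L <= x <= R0 ->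
    Rabs (f t x) <= M.
Proof.
  intros Hc A B L R0 HAB HLR.
  set (P := fun u v => exists M, forall t x, u <= t <= v -> L <= x <= R0 -> Rabs (f t x) <= M).
  change (P A B). apply cover; auto.
  - intros u v w _ _ [M1 H1] [M2 H2]. exists (Rmax M1 M2). intros t x Ht Hx.
    destruct (Rle_dec t v).
    + apply Rle_trans with M1; [apply H1; auto; lra| apply Rmax_l].
    + apply Rle_trans with M2; [apply H2; auto; lra| apply Rmax_r].
  - intros t0 _.
    set (Q := fun u v => exists d M, 0 < d /\ forall t x, Rabs (t - t0) < d -> u <= x <= v -> Rabs (f t x) <= M).
    assert (HQ : Q L R0).
    { apply cover; auto.
      - intros u v w _ _ [d1 [M1 [Hd1 H1]]] [d2 [M2 [Hd2 H2]]].
        exists (Rmin d1 d2), (Rmax M1 M2). split; [apply Rmin_glb_lt; auto|].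
        intros t x Ht Hx.
        assert (Rabs (t - t0) < d1) by (apply Rlt_le_trans with (Rmin d1 d2); auto; apply Rmin_l).
        assert (Rabs (t - t0) < d2) by (apply Rlt_le_trans with (Rmin d1 d2); auto; apply Rmin_r).
        destruct (Rle_dec x v).
        + apply Rle_trans with M1; [apply H1; auto; lra| apply Rmax_l].
        + apply Rle_trans with M2; [apply H2; auto; lra| apply Rmax_r].
      - intros x0 _. destruct (Hc t0 x0 1 Rlt_0_1) as [d [Hd Hd']].
        exists d. split; auto. intros u v Hu Hv. exists d, (Rabs (f t0 x0) + 1). split; auto.
        intros t x Ht Hx.
        assert (Rabs (f t x - f t0 x0) < 1) by (apply Hd'; auto; apply Rabs_def1; lra).
        pose proof (Rabs_triang_inv (f t x) (f t0 x0)). lra. }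
    destruct HQ as [d [M [Hd HM]]]. exists d. split; auto.
    intros u v Hu Hv. exists M. intros t x Ht Hx. apply HM; auto. apply Rabs_def1; lra.
Qed.

Lemma lip_of_deriv (g g' : R -> R) (L R0 M : R) :
  (forall x, derivable_pt_lim g x (g' x)) ->
  (forall x, L <= x <= R0 -> Rabs (g' x) <= M) ->
  forall x y, L <= x <= R0 -> L <= y <= R0 -> Rabs (g x - g y) <= M * Rabs (x - y).
Proof.
  intros Hd Hb.
  assert (K : forall x y, L <= x <= R0 -> L <= y <= R0 -> x < y -> Rabs (g x - g y) <= M * Rabs (x - y)).
  { intros x y Hx Hy Hxy. destruct (MVT_cor2 g g' x y Hxy (fun c _ => Hd c)) as [c [Hc1 Hc2]].
    rewrite <- Rabs_Ropp, Ropp_minus_distr, Hc1, <- (Rabs_Ropp (x - y)), Ropp_minus_distr, Rabs_mult.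
    apply Rmult_le_compat_r; [apply Rabs_pos| apply Hb; lra]. }
  intros x y Hx Hy. destruct (Rtotal_order x y) as [H|[H|H]].
  - apply K; auto.
  - subst. rewrite !Rminus_diag, Rabs_R0. assert (0 <= M).
    { apply Rle_trans with (Rabs (g' y)); [apply Rabs_pos| apply Hb; auto]. } lra.
  - rewrite <- Rabs_Ropp, Ropp_minus_distr, <- (Rabs_Ropp (x - y)), Ropp_minus_distr. apply K; auto.
Qed.

Lemma cont_of_deriv (g g' : R -> R) : (forall x, derivable_pt_lim g x (g' x)) ->
  forall x, continuous g x.
Proof.
  intros Hd x. apply continuity_pt_filterlim. apply derivable_continuous_pt.
  exists (g' x). apply Hd.
Qed.

Lemma exRInt_all (g g' : R -> R) : (forall x, derivable_pt_lim g x (g' x)) ->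
  forall a b, ex_RInt g a b.
Proof. intros Hd a b. apply (@ex_RInt_continuous R_CompleteNormedModule). intros z _. eapply cont_of_deriv; eauto. Qed.

Lemma RInt_bound (g : R -> R) (a b M : R) : ex_RInt g a b ->
  (forall x, Rmin a b <= x <= Rmax a b -> Rabs (g x) <= M) ->
  Rabs (RInt g a b) <= M * Rabs (b - a).
Proof.
  intros He Hb. destruct (Rle_dec a b).
  - rewrite (Rabs_right (b - a)) by lra. rewrite Rmult_comm. apply abs_RInt_le_const; auto.
    intros t Ht. apply Hb. rewrite Rmin_left, Rmax_right; lra.
  - rewrite <- opp_RInt_swap by (apply ex_RInt_swap; auto). change (opp (RInt g b a)) with (- RInt g b a).
    rewrite Rabs_Ropp, (Rabs_left (b - a)) by lra. replace (- (b - a)) with (a - b) by ring.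
    rewrite Rmult_comm. apply abs_RInt_le_const; [lra| apply ex_RInt_swap; auto|].
    intros t Ht. apply Hb. rewrite Rmin_right, Rmax_left; lra.
Qed.

Lemma RInt_diff (g : R -> R) c y z : (forall a b, ex_RInt g a b) ->
  RInt g c y - RInt g c z = RInt g z y.
Proof.
  intros He. rewrite <- (RInt_Chasles g c z y) by auto. change (plus ?a ?b) with (a + b). ring.
Qed.

Lemma piece_formula (p h : R -> R) (c d y1 y2 l m r : R) :
  (forall a b, ex_RInt p a b) ->
  (forall x, x < c -> p x = 0) -> (forall x, d < x -> p x = 0) ->
  y1 <= y2 ->
  (forall x, x < y1 -> h x = l) -> (forall x, y1 < x < y2 -> h x = m) ->
  (forall x, y2 < x -> h x = r) ->
  is_RInt (fun x => h x * p x) c d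
    (l * RInt p c y1 + m * (RInt p c y2 - RInt p c y1) + r * (RInt p c d - RInt p c y2)).
Proof.
  intros He Hc Hd H12 Hl Hm Hr.
  rewrite !RInt_diff by auto.
  assert (I1 : is_RInt (fun x => h x * p x) c y1 (l * RInt p c y1)).
  { apply (is_RInt_ext (V:=R_NormedModule)) with (fun x => scal l (p x)); [|apply (is_RInt_scal (V:=R_NormedModule)); apply (RInt_correct (V:=R_CompleteNormedModule)), He].
    intros x Hx. change (scal l (p x)) with (l * p x).
    destruct (Rle_dec c y1).
    - rewrite Rmin_left, Rmax_right in Hx by lra. rewrite Hl; lra.
    - rewrite Rmin_right, Rmax_left in Hx by lra. rewrite Hc; lra. }
  assert (I2 : is_RInt (fun x => h x * p x) y1 y2 (m * RInt p y1 y2)).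
  { apply (is_RInt_ext (V:=R_NormedModule)) with (fun x => scal m (p x)); [|apply (is_RInt_scal (V:=R_NormedModule)); apply (RInt_correct (V:=R_CompleteNormedModule)), He].
    intros x Hx. change (scal m (p x)) with (m * p x).
    rewrite Rmin_left, Rmax_right in Hx by lra. rewrite Hm; lra. }
  assert (I3 : is_RInt (fun x => h x * p x) y2 d (r * RInt p y2 d)).
  { apply (is_RInt_ext (V:=R_NormedModule)) with (fun x => scal r (p x)); [|apply (is_RInt_scal (V:=R_NormedModule)); apply (RInt_correct (V:=R_CompleteNormedModule)), He].
    intros x Hx. change (scal r (p x)) with (r * p x).
    destruct (Rle_dec y2 d).
    - rewrite Rmin_left, Rmax_right in Hx by lra. rewrite Hr; lra.
    - rewrite Rmin_right, Rmax_left in Hx by lra. rewrite Hd; lra. }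
  exact (is_RInt_Chasles _ _ _ _ _ _ (is_RInt_Chasles _ _ _ _ _ _ I1 I2) I3).
Qed.

Definition good_phi (phi fx ft : R -> R -> R) :=
  cont2 phi /\ cont2 fx /\ cont2 ft /\
  (forall t x, derivable_pt_lim (fun y => phi t y) x (fx t x)) /\
  (forall t x, derivable_pt_lim (fun s => phi s x) t (ft t x)).

Lemma test_good phi : test_fn phi -> exists fx ft, good_phi phi fx ft.
Proof.
  intros [Hs _]. destruct (Hs 1%nat) as [Hc [ft [fx [Ht [Hx [Hft Hfx]]]]]].
  exists fx, ft. repeat split; auto.
Qed.

Definition Phi (phi : R -> R -> R) (c t y : R) : R := RInt (phi t) c y.

Definition Gform phi c d s1 s2 l m r t :=
  l * Phi phi c t (s1 * t) + m * (Phi phi c t (Rmax s1 s2 * t) - Phi phi c t (s1 * t))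
  + r * (Phi phi c t d - Phi phi c t (Rmax s1 s2 * t)).

Lemma lip_cont (g : R -> R) t0 L :
  (forall t, Rabs (t - t0) < 1 -> Rabs (g t - g t0) <= L * Rabs (t - t0)) -> continuity_pt g t0.
Proof.
  intros Hl eps Heps. exists (Rmin 1 (eps / (Rabs L + 1))). split.
  { apply Rmin_glb_lt; [lra|]. apply Rdiv_lt_0_compat; [lra|]. pose proof (Rabs_pos L); lra. }
  intros t [_ Ht]. simpl in *. unfold R_dist in *.
  assert (H1 : Rabs (t - t0) < 1) by (apply Rlt_le_trans with (Rmin 1 (eps / (Rabs L + 1))); auto; apply Rmin_l).
  assert (H2 : Rabs (t - t0) < eps / (Rabs L + 1)) by (apply Rlt_le_trans with (Rmin 1 (eps / (Rabs L + 1))); auto; apply Rmin_r).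
  apply Rle_lt_trans with (L * Rabs (t - t0)); [apply Hl; auto|].
  pose proof (Rabs_pos L). pose proof (Rabs_pos (t - t0)). pose proof (Rle_abs L).
  apply Rle_lt_trans with (Rabs L * Rabs (t - t0)); [nra|].
  assert (E : (Rabs L + 1) * (eps / (Rabs L + 1)) = eps) by (field; lra).
  nra.
Qed.


Lemma phi_exR (phi fx ft : R -> R -> R) (Hg : good_phi phi fx ft) t a b : ex_RInt (phi t) a b.
Proof. pose proof Hg as Hg0; destruct Hg0 as [_ [_ [_ [Hx _]]]]. apply exRInt_all with (fx t). apply Hx. Qed.

Lemma Phi_cont (phi fx ft : R -> R -> R) (Hg : good_phi phi fx ft) (c : R) (y : R -> R) (t0 k : R) :
  (forall t, Rabs (y t - y t0) <= k * Rabs (t - t0)) ->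
  continuity_pt (fun t => Phi phi c t (y t)) t0.
Proof.
  intros Hy. pose proof Hg as Hg0; destruct Hg0 as [Hc [Hcx [Hct [Hx Ht]]]].
  set (X := Rabs c + Rabs (y t0) + Rabs k + 1).
  assert (HX : 0 <= X) by (unfold X; pose proof (Rabs_pos c); pose proof (Rabs_pos (y t0)); pose proof (Rabs_pos k); lra).
  destruct (box_bound phi Hc (t0 - 1) (t0 + 1) (- X) X) as [M HM]; try lra.
  destruct (box_bound ft Hct (t0 - 1) (t0 + 1) (- X) X) as [M2 HM2]; try lra.
  apply lip_cont with (M * k + M2 * Rabs (y t0 - c)).
  intros t Htt. unfold Phi.
  pose proof (Rabs_pos (y t0)) as P1. pose proof (Rabs_pos k) as P2. pose proof (Rabs_pos c) as P3.
  assert (Hyt : Rabs (y t) <= Rabs (y t0) + Rabs k).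
  { pose proof (Hy t). pose proof (Rabs_triang_inv (y t) (y t0)). pose proof (Rle_abs k).
    pose proof (Rabs_pos (t - t0)).
    assert (k * Rabs (t - t0) <= Rabs k) by nra. lra. }
  apply absle1 in Hyt. pose proof (absle1 _ _ (Rle_refl (Rabs (y t0)))) as Hy0.
  pose proof (absle1 _ _ (Rle_refl (Rabs c))) as Hc0.
  replace (RInt (phi t) c (y t) - RInt (phi t0) c (y t0)) with
     (RInt (phi t) (y t0) (y t) + (RInt (phi t) c (y t0) - RInt (phi t0) c (y t0))).
  2:{ rewrite <- (RInt_diff (phi t) c (y t) (y t0)) by apply (phi_exR phi fx ft Hg). ring. }
  assert (E2 : RInt (phi t) c (y t0) - RInt (phi t0) c (y t0) = RInt (fun x => phi t x - phi t0 x) c (y t0)).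
  { symmetry. apply (RInt_minus (V:=R_CompleteNormedModule)); apply (phi_exR phi fx ft Hg). }
  rewrite E2.
  pose proof (abslt1 _ _ Htt) as Htb.
  assert (HM0 : 0 <= M) by (apply Rle_trans with (Rabs (phi t0 0)); [apply Rabs_pos| apply HM; lra]).
  assert (B1 : Rabs (RInt (phi t) (y t0) (y t)) <= M * Rabs (y t - y t0)).
  { apply RInt_bound; [apply (phi_exR phi fx ft Hg)|]. intros x Hxx. apply HM; [lra|].
    pose proof (Rmin_l (y t0) (y t)). pose proof (Rmin_r (y t0) (y t)).
    pose proof (Rmax_l (y t0) (y t)). pose proof (Rmax_r (y t0) (y t)).
    assert (- X <= Rmin (y t0) (y t)) by (apply Rmin_glb; unfold X; lra).
    assert (Rmax (y t0) (y t) <= X) by (apply Rmax_lub; unfold X; lra).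
    lra. }
  assert (B2 : Rabs (RInt (fun x => phi t x - phi t0 x) c (y t0)) <= (M2 * Rabs (t - t0)) * Rabs (y t0 - c)).
  { apply RInt_bound.
    - apply (ex_RInt_minus (V:=R_NormedModule)); apply (phi_exR phi fx ft Hg).
    - intros x Hxx.
      assert (Hxb : - X <= x <= X).
      { assert (- X <= Rmin c (y t0)) by (apply Rmin_glb; unfold X; lra).
        assert (Rmax c (y t0) <= X) by (apply Rmax_lub; unfold X; lra).
        lra. }
      apply (lip_of_deriv (fun s => phi s x) (fun s => ft s x) (t0 - 1) (t0 + 1)).
      + intros s. apply Ht.
      + intros s Hs. apply HM2; auto.
      + lra.
      + lra. }
  pose proof (Rabs_triang (RInt (phi t) (y t0) (y t)) (RInt (fun x => phi t x - phi t0 x) c (y t0))).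
  pose proof (Hy t). 
  assert (M * Rabs (y t - y t0) <= M * (k * Rabs (t - t0))) by (apply Rmult_le_compat_l; auto).
  nra.
Qed.

Lemma cpt_plus (f g : R -> R) x : continuity_pt f x -> continuity_pt g x -> continuity_pt (fun t => f t + g t) x.
Proof. intros; exact (continuity_pt_plus f g x H H0). Qed.
Lemma cpt_minus (f g : R -> R) x : continuity_pt f x -> continuity_pt g x -> continuity_pt (fun t => f t - g t) x.
Proof. intros; exact (continuity_pt_minus f g x H H0). Qed.
Lemma cpt_scal (f : R -> R) k x : continuity_pt f x -> continuity_pt (fun t => k * f t) x.
Proof. intros; exact (continuity_pt_scal f k x H). Qed.

Lemma Phi_cont_lin (phi fx ft : R -> R -> R) (Hg : good_phi phi fx ft) c k j t0 : continuity_pt (fun t => Phi phi c t (k * t + j)) t0.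
Proof.
  apply (Phi_cont phi fx ft Hg) with (Rabs k). intros t.
  replace (k * t + j - (k * t0 + j)) with (k * (t - t0)) by ring. rewrite Rabs_mult. lra.
Qed.

Lemma Gform_cont (phi fx ft : R -> R -> R) (Hg : good_phi phi fx ft) c d s1 s2 l m r t0 : continuity_pt (Gform phi c d s1 s2 l m r) t0.
Proof.
  assert (P1 : forall k, continuity_pt (fun t => Phi phi c t (k * t)) t0).
  { intros k. apply continuity_pt_ext with (fun t => Phi phi c t (k * t + 0)).
    - intros t. rewrite Rplus_0_r. reflexivity.
    - apply (Phi_cont_lin phi fx ft Hg). }
  assert (P2 : continuity_pt (fun t => Phi phi c t d) t0).
  { apply continuity_pt_ext with (fun t => Phi phi c t (0 * t + d)).
    - intros t. rewrite Rmult_0_l, Rplus_0_l. reflexivity.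
    - apply (Phi_cont_lin phi fx ft Hg). }
  unfold Gform. repeat first [apply cpt_minus | apply cpt_plus | apply cpt_scal]; auto.
Qed.

Lemma supp_x (phi : R -> R -> R) a b c d t x : supported_in phi a b c d -> (x < c \/ d < x) -> phi t x = 0.
Proof. intros Hs Hx. apply Hs. lra. Qed.

Lemma Gform_int (phi fx ft : R -> R -> R) (Hg : good_phi phi fx ft) a b c d s1 s2 l m r t : supported_in phi a b c d -> 0 <= t ->
  is_RInt (fun x => three_state s1 s2 l m r t x * phi t x) c d (Gform phi c d s1 s2 l m r t).
Proof.
  intros Hs Ht. unfold Gform, Phi.
  pose proof (Rmax_l s1 s2). pose proof (Rmax_r s1 s2).
  assert (s1 * t <= Rmax s1 s2 * t) by (apply Rmult_le_compat_r; auto).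
  assert (s2 * t <= Rmax s1 s2 * t) by (apply Rmult_le_compat_r; auto).
  apply piece_formula; auto.
  - apply (phi_exR phi fx ft Hg).
  - intros x Hx. eapply supp_x; eauto.
  - intros x Hx. eapply supp_x; eauto.
  - intros x Hx. unfold three_state. destruct (Rlt_dec x (s1 * t)); auto. lra.
  - intros x Hx. unfold three_state. destruct (Rlt_dec x (s1 * t)); [lra|].
    destruct (Rlt_dec (s2 * t) x); auto.
    destruct (Rle_dec s1 s2).
    + rewrite Rmax_right in Hx by lra. lra.
    + rewrite Rmax_left in Hx by lra. lra.
  - intros x Hx. unfold three_state. destruct (Rlt_dec x (s1 * t)); [lra|].
    destruct (Rlt_dec (s2 * t) x); auto. lra.
Qed.

Lemma Gg_int (phi fx ft : R -> R -> R) (Hg : good_phi phi fx ft) a b c d sg l r t : supported_in phi a b c d ->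
  is_RInt (fun x => (l + (r - l) * H (x - sg * t)) * phi t x) c d (Gform phi c d sg sg l 0 r t).
Proof.
  intros Hs. unfold Gform, Phi. rewrite Rmax_left by lra.
  apply piece_formula; auto.
  - apply (phi_exR phi fx ft Hg).
  - intros x Hx. eapply supp_x; eauto.
  - intros x Hx. eapply supp_x; eauto.
  - lra.
  - intros x Hx. unfold H. destruct (Rlt_dec 0 (x - sg * t)); lra.
  - intros x Hx. lra.
  - intros x Hx. unfold H. destruct (Rlt_dec 0 (x - sg * t)); lra.
Qed.

Lemma phi_line_cont (phi fx ft : R -> R -> R) (Hg : good_phi phi fx ft) sg W t0 : continuity_pt (fun t => W * t * phi t (sg * t)) t0.
Proof.
  apply continuity_pt_mult.
  - apply continuity_pt_ext with (fun t => W * t); [reflexivity|].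
    apply cpt_scal. apply continuity_pt_id.
  - pose proof Hg as Hg0; destruct Hg0 as [Hc _]. intros eps Heps. destruct (Hc t0 (sg * t0) eps Heps) as [d [Hd Hd']].
    exists (Rmin d (d / (Rabs sg + 1))). split.
    { apply Rmin_glb_lt; auto. apply Rdiv_lt_0_compat; auto. pose proof (Rabs_pos sg); lra. }
    intros t [_ Htt]. simpl in *. unfold R_dist in *. apply Hd'.
    + apply Rlt_le_trans with (Rmin d (d / (Rabs sg + 1))); auto; apply Rmin_l.
    + assert (Rabs (t - t0) < d / (Rabs sg + 1)) by (apply Rlt_le_trans with (Rmin d (d / (Rabs sg + 1))); auto; apply Rmin_r).
      replace (sg * t - sg * t0) with (sg * (t - t0)) by ring. rewrite Rabs_mult.
      assert ((Rabs sg + 1) * (d / (Rabs sg + 1)) = d) by (field; pose proof (Rabs_pos sg); lra).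
      pose proof (Rabs_pos sg). pose proof (Rabs_pos (t - t0)). nra.
Qed.

Lemma est_pt phi fx ft c d l m r s1 s2 sg W e1 e2 V M M1 X t :
  good_phi phi fx ft -> s1 <= s2 -> 0 <= t ->
  Rabs (s1 - sg) <= e2 -> Rabs (s2 - sg) <= e2 ->
  Rabs (m * (s2 - s1) - W) <= e1 -> Rabs (m * (s2 - s1)) <= V ->
  (forall x, - X <= x <= X -> Rabs (phi t x) <= M) ->
  (forall x, - X <= x <= X -> Rabs (fx t x) <= M1) ->
  - X <= s1 * t <= X -> - X <= s2 * t <= X -> - X <= sg * t <= X ->
  Rabs (Gform phi c d s1 s2 l m r t - Gform phi c d sg sg l 0 r t - W * t * phi t (sg * t))
    <= (Rabs l + Rabs r) * M * t * e2 + e1 * t * M + V * t * t * M1 * e2.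
Proof.
  intros Hg H12 Ht Hs1 Hs2 HW HV HM HM1 B1 B2 B3.
  assert (Hex := phi_exR phi fx ft Hg t).
  unfold Gform. rewrite (Rmax_right s1 s2 H12), (Rmax_left sg sg) by lra.
  set (P := Phi phi c t). set (y1 := s1 * t). set (y2 := s2 * t). set (z := sg * t).
  assert (HP : forall u v, @eq R (P u - P v) (RInt (phi t) v u)).
  { intros u v. unfold P, Phi. apply RInt_diff. apply Hex. }
  assert (Ey1 : y1 = s1 * t) by reflexivity. assert (Ey2 : y2 = s2 * t) by reflexivity.
  assert (Ez : z = sg * t) by reflexivity. clearbody P y1 y2 z. rewrite <- Ey1 in B1. rewrite <- Ey2 in B2. rewrite <- Ez in B3.
  assert (HM0 : 0 <= M). { apply Rle_trans with (Rabs (phi t z)). apply Rabs_pos. apply HM. idtac. exact B3. }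
  assert (HM10 : 0 <= M1). { apply Rle_trans with (Rabs (fx t z)). apply Rabs_pos. apply HM1. exact B3. }
  assert (Hd1 : Rabs (y1 - z) <= t * e2).
  { rewrite Ey1, Ez. replace (s1 * t - sg * t) with (t * (s1 - sg)) by ring. rewrite Rabs_mult, (Rabs_right t) by lra.
    apply Rmult_le_compat_l; auto. }
  assert (Hd2 : Rabs (y2 - z) <= t * e2).
  { rewrite Ey2, Ez. replace (s2 * t - sg * t) with (t * (s2 - sg)) by ring. rewrite Rabs_mult, (Rabs_right t) by lra.
    apply Rmult_le_compat_l; auto. }
  assert (Bnd : forall u v, - X <= u <= X -> - X <= v <= X -> Rabs (P u - P v) <= M * Rabs (u - v)).
  { intros u v Hu Hv. rewrite HP. apply RInt_bound; auto. intros x Hx.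
    apply HM. pose proof (Rmin_l v u). pose proof (Rmin_r v u). pose proof (Rmax_l v u). pose proof (Rmax_r v u).
    assert (- X <= Rmin v u) by (apply Rmin_glb; lra). assert (Rmax v u <= X) by (apply Rmax_lub; lra). lra. }
  assert (E1 : Rabs (l * (P y1 - P z)) <= Rabs l * (M * (t * e2))).
  { rewrite Rabs_mult. apply Rmult_le_compat_l; [apply Rabs_pos|].
    apply Rle_trans with (M * Rabs (y1 - z)); [apply Bnd; lra|]. apply Rmult_le_compat_l; auto. }
  assert (E2 : Rabs (r * (P z - P y2)) <= Rabs r * (M * (t * e2))).
  { rewrite Rabs_mult. apply Rmult_le_compat_l; [apply Rabs_pos|].
    apply Rle_trans with (M * Rabs (z - y2)); [apply Bnd; lra|]. apply Rmult_le_compat_l; auto.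
    rewrite Rabs_minus_sym; auto. }
  assert (Q1 : @eq R (RInt (fun x => phi t x - phi t z) y1 y2) (RInt (phi t) y1 y2 - (y2 - y1) * phi t z)).
  { rewrite (RInt_minus (V:=R_CompleteNormedModule) (phi t) (fun _ => phi t z)); [| apply Hex | apply (ex_RInt_const (V:=R_NormedModule))].
    rewrite (RInt_const (V:=R_CompleteNormedModule)). reflexivity. }
  set (Rr := (RInt (fun x => phi t x - phi t z) y1 y2 : R)).
  assert (EM : P y2 - P y1 = Rr + (y2 - y1) * phi t z).
  { rewrite HP. unfold Rr. rewrite Q1. lra. }
  assert (ER : Rabs Rr <= (M1 * (t * e2)) * Rabs (y2 - y1)).
  { unfold Rr. apply RInt_bound.
    - apply (ex_RInt_minus (V:=R_NormedModule)); [apply Hex| apply (ex_RInt_const (V:=R_NormedModule))].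
    - intros x Hx. rewrite Rmin_left, Rmax_right in Hx by (rewrite Ey1, Ey2; apply Rmult_le_compat_r; auto).
      apply absle1 in Hd1. apply absle1 in Hd2.
      apply Rle_trans with (M1 * Rabs (x - z)).
      + apply (lip_of_deriv (fun y => phi t y) (fun y => fx t y) (- X) X); auto.
        * destruct Hg as [_ [_ [_ [Hx' _]]]]. intros y. apply Hx'.
        * lra.
      + apply Rmult_le_compat_l; auto. apply absle2. lra. }
  assert (EY : y2 - y1 = (s2 - s1) * t) by (rewrite Ey1, Ey2; ring).
  replace (l * P y1 + m * (P y2 - P y1) + r * (P d - P y2) - (l * P z + 0 * (P z - P z) + r * (P d - P z)) - W * t * phi t z)
    with (l * (P y1 - P z) + r * (P z - P y2) + (m * Rr + (m * (s2 - s1) - W) * t * phi t z)) by (rewrite EM, EY; ring).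
  assert (E3 : Rabs (m * Rr) <= V * t * t * M1 * e2).
  { rewrite Rabs_mult. rewrite EY in ER. rewrite Rabs_mult, (Rabs_right t) in ER by lra.
    apply Rle_trans with (Rabs m * (M1 * (t * e2) * (Rabs (s2 - s1) * t))).
    - apply Rmult_le_compat_l; auto. apply Rabs_pos.
    - rewrite Rabs_mult in HV. pose proof (Rabs_pos m). pose proof (Rabs_pos (s2 - s1)).
      assert (0 <= e2) by (pose proof (Rabs_pos (s1 - sg)); lra).
      assert (0 <= M1 * t * t * e2) by (apply Rmult_le_pos; [apply Rmult_le_pos|]; try apply Rmult_le_pos; lra).
      replace (Rabs m * (M1 * (t * e2) * (Rabs (s2 - s1) * t))) with ((Rabs m * Rabs (s2 - s1)) * (M1 * t * t * e2)) by ring.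
      replace (V * t * t * M1 * e2) with (V * (M1 * t * t * e2)) by ring.
      apply Rmult_le_compat_r; auto. }
  assert (E4 : Rabs ((m * (s2 - s1) - W) * t * phi t z) <= e1 * t * M).
  { rewrite !Rabs_mult, (Rabs_right t) by lra.
    apply Rmult_le_compat; [apply Rmult_le_pos; [apply Rabs_pos| lra]| apply Rabs_pos| |apply HM; lra].
    apply Rmult_le_compat_r; auto. }
  pose proof (Rabs_triang (l * (P y1 - P z) + r * (P z - P y2)) (m * Rr + (m * (s2 - s1) - W) * t * phi t z)).
  pose proof (Rabs_triang (l * (P y1 - P z)) (r * (P z - P y2))).
  pose proof (Rabs_triang (m * Rr) ((m * (s2 - s1) - W) * t * phi t z)).
  nra.
Qed.

Lemma sq_up e2 q X : 0 <= e2 -> 0 <= q -> 0 <= X ->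
  sqrt (e2 ^ 2 + 4 * (q * q) * X ^ 2) <= e2 + 2 * q * X.
Proof.
  intros. assert (0 <= q * X) by (apply Rmult_le_pos; auto).
  apply Rle_trans with (sqrt ((e2 + 2 * q * X) * (e2 + 2 * q * X))).
  - apply sqrt_le_1_alt. nra.
  - rewrite sqrt_square; lra.
Qed.

Lemma sq_lo1 e2 q X : 0 <= e2 -> e2 <= sqrt (e2 ^ 2 + 4 * (q * q) * X ^ 2).
Proof.
  intros. apply Rle_trans with (sqrt (e2 * e2)).
  - rewrite sqrt_square; lra.
  - apply sqrt_le_1_alt. assert (0 <= (q * q) * X ^ 2) by (apply Rmult_le_pos; [nra| apply pow2_ge_0]). simpl. nra.
Qed.

Lemma sq_lo2 e2 q X : 0 <= q -> 0 <= X -> 2 * q * X <= sqrt (e2 ^ 2 + 4 * (q * q) * X ^ 2).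
Proof.
  intros. assert (0 <= q * X) by (apply Rmult_le_pos; auto).
  apply Rle_trans with (sqrt ((2 * q * X) * (2 * q * X))).
  - rewrite sqrt_square; lra.
  - apply sqrt_le_1_alt. simpl. nra.
Qed.

Lemma sq_lo3 e2 q X : 0 < e2 -> 0 < q -> 0 < X -> e2 < sqrt (e2 ^ 2 + 4 * (q * q) * X ^ 2).
Proof.
  intros. apply Rle_lt_trans with (sqrt (e2 * e2)).
  - rewrite sqrt_square; lra.
  - apply sqrt_lt_1_alt. assert (0 < q * q * X ^ 2) by (apply Rmult_lt_0_compat; [nra| apply pow_lt; auto]).
    simpl in *. nra.
Qed.

Lemma sq_diff e2 q X Y : 0 <= e2 -> 0 < q -> 0 < X -> 0 < Y ->
  Rabs (sqrt (e2 ^ 2 + 4 * (q * q) * Y ^ 2) - sqrt (e2 ^ 2 + 4 * (q * q) * X ^ 2)) <= 2 * q * Rabs (Y - X).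
Proof.
  intros He Hq HX HY.
  pose proof (sq_lo2 e2 q X (Rlt_le _ _ Hq) (Rlt_le _ _ HX)).
  pose proof (sq_lo2 e2 q Y (Rlt_le _ _ Hq) (Rlt_le _ _ HY)).
  assert (E1 : sqrt (e2 ^ 2 + 4 * (q * q) * X ^ 2) * sqrt (e2 ^ 2 + 4 * (q * q) * X ^ 2) = e2 ^ 2 + 4 * (q * q) * X ^ 2)
    by (apply sqrt_sqrt; nra).
  assert (E2 : sqrt (e2 ^ 2 + 4 * (q * q) * Y ^ 2) * sqrt (e2 ^ 2 + 4 * (q * q) * Y ^ 2) = e2 ^ 2 + 4 * (q * q) * Y ^ 2)
    by (apply sqrt_sqrt; nra).
  set (S1 := sqrt (e2 ^ 2 + 4 * (q * q) * X ^ 2)) in *. set (S2 := sqrt (e2 ^ 2 + 4 * (q * q) * Y ^ 2)) in *.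
  clearbody S1 S2.
  assert (Hp : (S2 - S1) * (S2 + S1) = 4 * (q * q) * (Y - X) * (Y + X)) by nra.
  assert (0 < S1 + S2) by nra.
  assert (Hp' : (S2 - S1) * (S2 + S1) = (2 * q * (Y - X)) * (2 * q * (Y + X))) by (rewrite Hp; ring).
  assert (H3 : Rabs (S2 - S1) * (S2 + S1) = Rabs (2 * q * (Y - X)) * (2 * q * (Y + X))).
  { rewrite <- (Rabs_right (S2 + S1)) by lra. rewrite <- (Rabs_right (2 * q * (Y + X))) by nra.
    rewrite <- !Rabs_mult. rewrite Hp'. reflexivity. }
  rewrite Rabs_mult, (Rabs_right (2 * q)) in H3 by lra.
  pose proof (Rabs_pos (Y - X)). pose proof (Rabs_pos (S2 - S1)).
  apply Rmult_le_reg_r with (S2 + S1); [lra|]. rewrite H3.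
  apply Rmult_le_compat_l; [nra| nra].
Qed.

Definition Wc e2 um vm up vp := (vp * (um - up + 2 * e2) - vm * (up - um + 2 * e2)) / 2.

Lemma asym (e2 um vm up vp : R) : 0 < e2 -> 0 < vm -> 0 < vp -> up < um - 2 * e2 ->
  exists K q0, 0 < K /\ 0 < q0 /\ forall e1 us vs, 0 < e1 -> sqrt e1 < q0 ->
    two_shock e1 e2 um vm up vp us vs ->
    Rabs (us - ((um + up) / 2 + e2)) <= K * sqrt e1 /\
    Rabs (sigma1 e2 um vm us vs - (um + up) / 2) <= K * sqrt e1 /\
    Rabs (sigma2 e2 up vp us vs - (um + up) / 2) <= K * sqrt e1 /\
    Rabs (vs * (sigma2 e2 up vp us vs - sigma1 e2 um vm us vs) - Wc e2 um vm up vp) <= K * sqrt e1 /\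
    0 < vs.
Proof.
  intros He2 Hvm Hvp HD.
  set (D := um - up). set (d0 := D - 2 * e2). set (kap := 8 / d0).
  assert (Hd0 : 0 < d0) by (unfold d0, D; lra).
  assert (Hkap : 0 < kap) by (unfold kap; apply Rdiv_lt_0_compat; lra).
  set (sg := (um + up) / 2).
  set (K0 := 2 * (vm + vp) * kap * D + Rabs (vp - vm) + (vm + vp) * kap * e2).
  set (K1 := K0 + (K0 + Rabs (sg + e2 - um)) * (2 * vm * kap)).
  set (K2 := K0 + (K0 + Rabs (sg + e2 - up)) * (2 * vp * kap)).
  set (K3 := vp * K2 + vm * K1).
  assert (ED0 : D = um - up) by reflexivity. assert (Ed0 : d0 = D - 2 * e2) by reflexivity.
  assert (Ekap : kap = 8 / d0) by reflexivity. assert (Esg : sg = (um + up) / 2) by reflexivity.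
  assert (EK0 : K0 = 2 * (vm + vp) * kap * D + Rabs (vp - vm) + (vm + vp) * kap * e2) by reflexivity.
  assert (EK1 : K1 = K0 + (K0 + Rabs (sg + e2 - um)) * (2 * vm * kap)) by reflexivity.
  assert (EK2 : K2 = K0 + (K0 + Rabs (sg + e2 - up)) * (2 * vp * kap)) by reflexivity.
  assert (EK3 : K3 = vp * K2 + vm * K1) by reflexivity.
  clearbody K3 K2 K1 K0 sg kap d0 D.
  assert (HK0 : 0 <= K0).
  { rewrite EK0. pose proof (Rabs_pos (vp - vm)). assert (0 <= D) by (rewrite ED0; lra).
    assert (0 <= (vm + vp) * kap) by nra. nra. }
  assert (HK1 : 0 <= K1) by (rewrite EK1; pose proof (Rabs_pos (sg + e2 - um)); apply Rplus_le_le_0_compat; [lra|]; apply Rmult_le_pos; nra).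
  assert (HK2 : 0 <= K2) by (rewrite EK2; pose proof (Rabs_pos (sg + e2 - up)); apply Rplus_le_le_0_compat; [lra|]; apply Rmult_le_pos; nra).
  assert (HK3 : 0 <= K3) by (rewrite EK3; nra).
  exists (K0 + K1 + K2 + K3 + 1), (Rmin 1 (Rmin (1 / (3 * vp * kap)) (1 / (2 * vm * kap)))).
  split; [lra|]. split.
  { apply Rmin_glb_lt; [lra| apply Rmin_glb_lt; apply Rdiv_lt_0_compat; nra]. }
  intros e1 us vs He1 Hq [Hvs [Hus1 [Hus2 [Eus Eup]]]].
  set (q := sqrt e1) in *.
  assert (Hq0 : 0 < q) by (apply sqrt_lt_R0; auto).
  assert (Eq : e1 = q * q) by (unfold q; rewrite sqrt_sqrt; lra).
  assert (Hq1 : q < 1) by (apply Rlt_le_trans with (1 := Hq); apply Rmin_l).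
  assert (Hq2 : q < 1 / (3 * vp * kap)) by (apply Rlt_le_trans with (1 := Hq); eapply Rle_trans; [apply Rmin_r| apply Rmin_l]).
  assert (Hq3 : q < 1 / (2 * vm * kap)) by (apply Rlt_le_trans with (1 := Hq); eapply Rle_trans; [apply Rmin_r| apply Rmin_r]).
  clearbody q. subst e1.
  assert (Hvm' : vm < vs) by (apply Rle_lt_trans with (Rmax vm vp); [apply Rmax_l| auto]).
  assert (Hvp' : vp < vs) by (apply Rle_lt_trans with (Rmax vm vp); [apply Rmax_r| auto]).
  set (S1 := sqrt (e2 ^ 2 + 4 * (q * q) * (vs + vm) ^ 2)) in *.
  set (S2 := sqrt (e2 ^ 2 + 4 * (q * q) * (vs + vp) ^ 2)) in *.
  assert (US1 : S1 <= e2 + 2 * q * (vs + vm)) by (apply sq_up; lra).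
  assert (US2 : S2 <= e2 + 2 * q * (vs + vp)) by (apply sq_up; lra).
  assert (LS1 : e2 <= S1) by (apply sq_lo1; lra).
  assert (LS2 : e2 <= S2) by (apply sq_lo1; lra).
  assert (DS : Rabs (S2 - S1) <= 2 * q * Rabs ((vs + vp) - (vs + vm))) by (apply sq_diff; lra).
  replace ((vs + vp) - (vs + vm)) with (vp - vm) in DS by ring.
  clearbody S1 S2.
  set (al := (vs - vm) / (vs + vm)). set (be := (vs - vp) / (vs + vp)).
  assert (Eal : us = um - al * (S1 - e2)) by (rewrite Eus; unfold al; field; lra).
  assert (Ebe : up = us - be * (e2 + S2)) by (rewrite Eup; unfold be; field; lra).
  assert (Hal : 1 - al = 2 * vm / (vs + vm)) by (unfold al; field; lra).
  assert (Hbe : 1 - be = 2 * vp / (vs + vp)) by (unfold be; field; lra).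
  assert (Hal0 : 0 <= al) by (unfold al; apply Rmult_le_pos; [lra| left; apply Rinv_0_lt_compat; lra]).
  assert (Hbe0 : 0 <= be) by (unfold be; apply Rmult_le_pos; [lra| left; apply Rinv_0_lt_compat; lra]).
  assert (Hal1 : al <= 1) by (assert (0 <= 2 * vm / (vs + vm)) by (apply Rmult_le_pos; [lra| left; apply Rinv_0_lt_compat; lra]); lra).
  assert (Hbe1 : be <= 1) by (assert (0 <= 2 * vp / (vs + vp)) by (apply Rmult_le_pos; [lra| left; apply Rinv_0_lt_compat; lra]); lra).
  clearbody al be.
  assert (ED : D = al * (S1 - e2) + be * (e2 + S2)) by (rewrite ED0; lra).
  assert (Hbig : d0 <= 8 * q * vs).
  { assert (D <= S1 + S2) by nra. rewrite Ed0. nra. }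
  assert (Hinv : forall c k, 0 <= c -> 0 <= k -> c / (vs + k) <= c * kap * q).
  { intros c k Hc Hk. rewrite Ekap. apply Rmult_le_reg_r with (vs + k); [lra|].
    unfold Rdiv. rewrite Rmult_assoc, Rinv_l, Rmult_1_r by lra.
    apply Rmult_le_reg_r with d0; [lra|].
    replace (c * (8 * / d0) * q * (vs + k) * d0) with (c * (8 * q * (vs + k)) * (d0 * / d0)) by ring.
    rewrite Rinv_r by lra. rewrite Rmult_1_r. apply Rmult_le_compat_l; [lra|]. nra. }
  assert (Hvs3 : 3 * vp <= vs).
  { assert (3 * vp * kap * q < 1).
    { apply Rmult_lt_reg_r with (/ (3 * vp * kap)). apply Rinv_0_lt_compat; nra.
      replace (3 * vp * kap * q * / (3 * vp * kap)) with q by (field; nra). unfold Rdiv in Hq2. lra. }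
    assert (1 <= kap * q * vs).
    { rewrite Ekap. apply Rmult_le_reg_r with d0; [lra|].
      replace (8 / d0 * q * vs * d0) with (8 * q * vs * (d0 / d0)) by (unfold Rdiv; ring).
      unfold Rdiv; rewrite Rinv_r by lra. lra. }
    nra. }
  assert (Hvs2 : 2 * vm <= vs).
  { assert (2 * vm * kap * q < 1).
    { apply Rmult_lt_reg_r with (/ (2 * vm * kap)). apply Rinv_0_lt_compat; nra.
      replace (2 * vm * kap * q * / (2 * vm * kap)) with q by (field; nra). unfold Rdiv in Hq3. lra. }
    assert (1 <= kap * q * vs).
    { rewrite Ekap. apply Rmult_le_reg_r with d0; [lra|].
      replace (8 / d0 * q * vs * d0) with (8 * q * vs * (d0 / d0)) by (unfold Rdiv; ring).
      unfold Rdiv; rewrite Rinv_r by lra. lra. }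
    nra. }
  assert (Hbe2 : 1 / 2 <= be).
  { assert (2 * vp / (vs + vp) <= 1 / 2).
    { apply Rmult_le_reg_r with (vs + vp); [lra|]. unfold Rdiv. rewrite Rmult_assoc, Rinv_l by lra. lra. }
    lra. }
  assert (HS2 : S2 <= 2 * D) by nra.
  assert (Hal2 : 1 - al <= 2 * vm * kap * q) by (rewrite Hal; apply Hinv; lra).
  assert (Hbe3 : 1 - be <= 2 * vp * kap * q) by (rewrite Hbe; apply Hinv; lra).
  assert (Eu : us - (sg + e2) = (be * S2 - al * S1 + (al + be - 2) * e2) / 2) by (rewrite Esg; lra).
  assert (HU : Rabs (us - (sg + e2)) <= K0 * q).
  { rewrite Eu.
    assert (Rabs (be * S2 - al * S1) <= ((1 - al) + (1 - be)) * (2 * D) + 2 * q * Rabs (vp - vm)).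
    { replace (be * S2 - al * S1) with ((be - al) * S2 + al * (S2 - S1)) by ring.
      eapply Rle_trans; [apply Rabs_triang|]. rewrite !Rabs_mult.
      assert (Rabs (be - al) <= (1 - al) + (1 - be)) by (apply absle2; lra).
      rewrite (Rabs_right S2) by lra. rewrite (Rabs_right al) by lra.
      assert (0 <= D) by (rewrite ED0; lra).
      apply Rplus_le_compat; [nra|]. apply Rle_trans with (Rabs (S2 - S1)); [|exact DS]. pose proof (Rabs_pos (S2 - S1)). nra. }
    apply absle2. apply absle1 in H.
    assert (0 <= e2 * (2 - al - be) <= e2 * ((2 * vm * kap * q) + (2 * vp * kap * q))) by (split; nra).
    rewrite EK0. split; nra. }
  assert (HU1 : Rabs (us - um) <= K0 + Rabs (sg + e2 - um)).
  { replace (us - um) with ((us - (sg + e2)) + (sg + e2 - um)) by ring.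
    eapply Rle_trans; [apply Rabs_triang|]. nra. }
  assert (HU2 : Rabs (us - up) <= K0 + Rabs (sg + e2 - up)).
  { replace (us - up) with ((us - (sg + e2)) + (sg + e2 - up)) by ring.
    eapply Rle_trans; [apply Rabs_triang|]. nra. }
  assert (Es1 : sigma1 e2 um vm us vs - sg = (us - (sg + e2)) + (us - um) * (vm / (vs - vm)))
    by (unfold sigma1; rewrite Esg; field; lra).
  assert (Es2 : sigma2 e2 up vp us vs - sg = (us - (sg + e2)) + (us - up) * (vp / (vs - vp)))
    by (unfold sigma2; rewrite Esg; field; lra).
  assert (Hr1 : 0 <= vm / (vs - vm) <= 2 * vm * kap * q).
  { split; [apply Rmult_le_pos; [lra| left; apply Rinv_0_lt_compat; lra]|].
    apply Rle_trans with (2 * vm / (vs + 0)); [|apply Hinv; lra].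
    apply Rmult_le_reg_r with ((vs - vm) * (vs + 0)); [nra|].
    replace (vm / (vs - vm) * ((vs - vm) * (vs + 0))) with (vm * vs) by (field; lra).
    replace (2 * vm / (vs + 0) * ((vs - vm) * (vs + 0))) with (2 * vm * (vs - vm)) by (field; lra). nra. }
  assert (Hr2 : 0 <= vp / (vs - vp) <= 2 * vp * kap * q).
  { split; [apply Rmult_le_pos; [lra| left; apply Rinv_0_lt_compat; lra]|].
    apply Rle_trans with (2 * vp / (vs + 0)); [|apply Hinv; lra].
    apply Rmult_le_reg_r with ((vs - vp) * (vs + 0)); [nra|].
    replace (vp / (vs - vp) * ((vs - vp) * (vs + 0))) with (vp * vs) by (field; lra).
    replace (2 * vp / (vs + 0) * ((vs - vp) * (vs + 0))) with (2 * vp * (vs - vp)) by (field; lra). nra. }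
  assert (HS1 : Rabs (sigma1 e2 um vm us vs - sg) <= K1 * q).
  { rewrite Es1. eapply Rle_trans; [apply Rabs_triang|]. rewrite Rabs_mult, (Rabs_right (vm / (vs - vm))) by lra.
    rewrite EK1. pose proof (Rabs_pos (us - um)). nra. }
  assert (HS2' : Rabs (sigma2 e2 up vp us vs - sg) <= K2 * q).
  { rewrite Es2. eapply Rle_trans; [apply Rabs_triang|]. rewrite Rabs_mult, (Rabs_right (vp / (vs - vp))) by lra.
    rewrite EK2. pose proof (Rabs_pos (us - up)). nra. }
  assert (EW : vs * (sigma2 e2 up vp us vs - sigma1 e2 um vm us vs) - Wc e2 um vm up vp
     = vp * (sigma2 e2 up vp us vs - sg) - vm * (sigma1 e2 um vm us vs - sg))
    by (unfold sigma1, sigma2, Wc; rewrite Esg; field; lra).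
  assert (HW : Rabs (vs * (sigma2 e2 up vp us vs - sigma1 e2 um vm us vs) - Wc e2 um vm up vp) <= K3 * q).
  { rewrite EW. unfold Rminus at 1. eapply Rle_trans; [apply Rabs_triang|].
    rewrite Rabs_Ropp, !Rabs_mult, (Rabs_right vp), (Rabs_right vm) by lra. rewrite EK3. nra. }
  repeat split; try lra; [eapply Rle_trans; [apply HU| nra] | eapply Rle_trans; [apply HS1| nra]
    | eapply Rle_trans; [apply HS2'| nra] | eapply Rle_trans; [apply HW| nra]].
Qed.

Definition fshock e1 e2 um vm up vp v :=
  um + (v - vm) * (e2 - sqrt (e2 ^ 2 + 4 * e1 * (v + vm) ^ 2)) / (v + vm)
     + (vp - v) * (e2 + sqrt (e2 ^ 2 + 4 * e1 * (v + vp) ^ 2)) / (v + vp) - up.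

Lemma fshock_cont e1 e2 um vm up vp v : 0 < e1 -> 0 < v -> 0 < vm -> 0 < vp ->
  continuity_pt (fshock e1 e2 um vm up vp) v.
Proof.
  intros. unfold fshock.
  match goal with |- continuity_pt ?F v => assert (Hd : ex_derive F v) end.
  { assert (0 < e1 * ((v + vm) * ((v + vm) * 1))) by (apply Rmult_lt_0_compat; nra).
    assert (0 < e1 * ((v + vp) * ((v + vp) * 1))) by (apply Rmult_lt_0_compat; nra).
    auto_derive. repeat split; try nra. }
  apply continuity_pt_filterlim. exact (ex_derive_continuous _ _ Hd).
Qed.

Lemma existence (e2 um vm up vp : R) : 0 < e2 -> 0 < vm -> 0 < vp -> up < um - 2 * e2 ->
  exists e0, 0 < e0 /\ forall e1, 0 < e1 < e0 ->
      exists us vs, two_shock e1 e2 um vm up vp us vs.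
Proof.
  intros He2 Hvm Hvp HD.
  set (v0 := Rmax vm vp).
  assert (Hv0 : vm <= v0 /\ vp <= v0) by (split; [apply Rmax_l| apply Rmax_r]).
  assert (Ev0 : v0 = Rmax vm vp) by reflexivity.
  set (qq := (um - up - 2 * e2) / (2 * (2 * v0 + vm + vp))).
  assert (Hqq : 0 < qq) by (unfold qq; apply Rdiv_lt_0_compat; lra).
  exists (qq * qq). split; [nra|].
  intros e1 [He1 He1'].
  set (q := sqrt e1).
  assert (Hq0 : 0 < q) by (apply sqrt_lt_R0; auto).
  assert (Eq : e1 = q * q) by (unfold q; rewrite sqrt_sqrt; lra).
  assert (Hq : q < qq).
  { unfold q. rewrite <- (sqrt_square qq) by lra. apply sqrt_lt_1_alt. lra. }
  assert (Eqq : qq * (2 * (2 * v0 + vm + vp)) = um - up - 2 * e2) by (unfold qq; field; lra).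
  clearbody q. clearbody qq v0.
  set (vh := v0 + vm + (um - up + e2 + 1) / (2 * q)).
  assert (Hvh : v0 < vh).
  { unfold vh. assert (0 < (um - up + e2 + 1) / (2 * q)) by (apply Rdiv_lt_0_compat; lra). lra. }
  assert (Evh : 2 * q * (vh - vm - v0) = um - up + e2 + 1) by (unfold vh; field; lra).
  clearbody vh.
  assert (F0 : 0 < fshock e1 e2 um vm up vp v0).
  { unfold fshock. rewrite Eq.
    pose proof (sq_up e2 q (v0 + vm) ltac:(lra) ltac:(lra) ltac:(lra)).
    pose proof (sq_up e2 q (v0 + vp) ltac:(lra) ltac:(lra) ltac:(lra)).
    pose proof (sq_lo1 e2 q (v0 + vm) ltac:(lra)).
    pose proof (sq_lo1 e2 q (v0 + vp) ltac:(lra)).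
    set (S1 := sqrt (e2 ^ 2 + 4 * (q * q) * (v0 + vm) ^ 2)) in *.
    set (S2 := sqrt (e2 ^ 2 + 4 * (q * q) * (v0 + vp) ^ 2)) in *. clearbody S1 S2.
    assert (T1 : - (S1 - e2) <= (v0 - vm) * (e2 - S1) / (v0 + vm)).
    { apply Rmult_le_reg_r with (v0 + vm); [lra|].
      replace ((v0 - vm) * (e2 - S1) / (v0 + vm) * (v0 + vm)) with ((v0 - vm) * (e2 - S1)) by (field; lra). nra. }
    assert (T2 : - (e2 + S2) <= (vp - v0) * (e2 + S2) / (v0 + vp)).
    { apply Rmult_le_reg_r with (v0 + vp); [lra|].
      replace ((vp - v0) * (e2 + S2) / (v0 + vp) * (v0 + vp)) with ((vp - v0) * (e2 + S2)) by (field; lra). nra. }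
    assert (q * (2 * (2 * v0 + vm + vp)) < um - up - 2 * e2).
    { apply Rlt_le_trans with (qq * (2 * (2 * v0 + vm + vp))). apply Rmult_lt_compat_r; lra.
      lra. }
    nra. }
  assert (F1 : fshock e1 e2 um vm up vp vh < 0).
  { unfold fshock. rewrite Eq.
    pose proof (sq_lo2 e2 q (vh + vm) ltac:(lra) ltac:(lra)).
    pose proof (sq_lo1 e2 q (vh + vm) ltac:(lra)).
    pose proof (sq_lo1 e2 q (vh + vp) ltac:(lra)).
    set (S1 := sqrt (e2 ^ 2 + 4 * (q * q) * (vh + vm) ^ 2)) in *.
    set (S2 := sqrt (e2 ^ 2 + 4 * (q * q) * (vh + vp) ^ 2)) in *. clearbody S1 S2.
    assert (T1 : (vh - vm) * (e2 - S1) / (vh + vm) <= e2 - 2 * q * (vh - vm)).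
    { apply Rmult_le_reg_r with (vh + vm); [lra|].
      replace ((vh - vm) * (e2 - S1) / (vh + vm) * (vh + vm)) with ((vh - vm) * (e2 - S1)) by (field; lra). nra. }
    assert (T2 : (vp - vh) * (e2 + S2) / (vh + vp) <= 0).
    { apply Rmult_le_reg_r with (vh + vp); [lra|].
      replace ((vp - vh) * (e2 + S2) / (vh + vp) * (vh + vp)) with ((vp - vh) * (e2 + S2)) by (field; lra). nra. }
    nra. }
  destruct (Ranalysis5.IVT_interv (fun v => - fshock e1 e2 um vm up vp v) v0 vh) as [z [Hz Hfz]].
  { intros a Ha. apply continuity_pt_opp. apply fshock_cont; lra. }
  { exact Hvh. }
  { lra. }
  { lra. }
  assert (Hz0 : v0 < z).
  { destruct (Req_dec z v0) as [E|E]; [subst; lra| lra]. }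
  exists (um + (z - vm) * (e2 - sqrt (e2 ^ 2 + 4 * e1 * (z + vm) ^ 2)) / (z + vm)), z.
  unfold fshock in Hfz. unfold two_shock.
  pose proof (sq_lo3 e2 q (z + vm) He2 Hq0 ltac:(lra)).
  pose proof (sq_lo1 e2 q (z + vp) ltac:(lra)).
  rewrite Eq in Hfz |- *.
  set (S1 := sqrt (e2 ^ 2 + 4 * (q * q) * (z + vm) ^ 2)) in *.
  set (S2 := sqrt (e2 ^ 2 + 4 * (q * q) * (z + vp) ^ 2)) in *. clearbody S1 S2.
  assert (T1 : (z - vm) * (e2 - S1) / (z + vm) < 0).
  { apply Rmult_lt_reg_r with (z + vm); [lra|].
    replace ((z - vm) * (e2 - S1) / (z + vm) * (z + vm)) with ((z - vm) * (e2 - S1)) by (field; lra). nra. }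
  assert (T2 : (vp - z) * (e2 + S2) / (z + vp) < 0).
  { apply Rmult_lt_reg_r with (z + vp); [lra|].
    replace ((vp - z) * (e2 + S2) / (z + vp) * (z + vp)) with ((vp - z) * (e2 + S2)) by (field; lra). nra. }
  split; [rewrite <- Ev0; exact Hz0|]. split; [lra|]. split; [lra|]. split; [reflexivity|].
  lra.
Qed.

Lemma sqrt_lt_of e1 q1 : 0 <= e1 -> 0 < q1 -> e1 < q1 * q1 -> sqrt e1 < q1.
Proof.
  intros. rewrite <- (sqrt_square q1) by lra. apply sqrt_lt_1_alt. lra.
Qed.

Lemma conv_general (e0 : R) (s1 s2 m : R -> R) (l r sg W : R) (w : R -> R) :
  0 < e0 ->
  (forall t, w t = W * t) ->
  (exists K q0 V, 0 < q0 /\ 0 <= K /\ forall e1, 0 < e1 < e0 -> sqrt e1 < q0 ->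
      s1 e1 <= s2 e1 /\ Rabs (s1 e1 - sg) <= K * sqrt e1 /\ Rabs (s2 e1 - sg) <= K * sqrt e1 /\
      Rabs (m e1 * (s2 e1 - s1 e1) - W) <= K * sqrt e1 /\ Rabs (m e1 * (s2 e1 - s1 e1)) <= V) ->
  dist_conv e0 (fun e1 t x => three_state (s1 e1) (s2 e1) l (m e1) r t x)
      (fun t x => l + (r - l) * H (x - sg * t)) w sg.
Proof.
  intros He0 Hw Hasy.
  assert (Ew : w = fun t => W * t) by (apply functional_extensionality; auto). subst w.
  intros phi Htest a b c d Ha Hab Hcd Hs.
  destruct (test_good phi Htest) as [fx [ft Hg]].
  assert (HcG : forall s1' s2' l' m' r' t, continuity_pt (Gform phi c d s1' s2' l' m' r') t).
  { intros. apply (Gform_cont phi fx ft Hg). }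
  assert (HexG : forall s1' s2' l' m' r', ex_RInt (Gform phi c d s1' s2' l' m' r') a b).
  { intros. apply ex_RInt_Reals_1. apply continuity_implies_RiemannInt; auto. }
  assert (HcW : forall t, continuity_pt (fun t => W * t * phi t (sg * t)) t).
  { intros. apply (phi_line_cont phi fx ft Hg). }
  assert (HexW : ex_RInt (fun t => W * t * phi t (sg * t)) a b).
  { apply ex_RInt_Reals_1. apply continuity_implies_RiemannInt; auto. }
  exists (fun e1 => RInt (Gform phi c d (s1 e1) (s2 e1) l (m e1) r) a b),
         (RInt (Gform phi c d sg sg l 0 r) a b + RInt (fun t => W * t * phi t (sg * t)) a b).
  split; [|split].
  - intros e1 He1. exists (Gform phi c d (s1 e1) (s2 e1) l (m e1) r). split.
    + intros t Ht.
      assert (His := Gform_int phi fx ft Hg a b c d (s1 e1) (s2 e1) l (m e1) r t Hs ltac:(lra)).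
      exists (ex_RInt_Reals_0 _ _ _ (ex_intro _ _ His)).
      rewrite <- RInt_Reals. apply is_RInt_unique. exact His.
    + exists (@continuity_implies_RiemannInt _ _ _ Hab (fun t _ => HcG _ _ _ _ _ t)).
      rewrite <- RInt_Reals. reflexivity.
  - exists (RInt (Gform phi c d sg sg l 0 r) a b). split.
    + exists (Gform phi c d sg sg l 0 r). split.
      * intros t Ht.
        assert (His := Gg_int phi fx ft Hg a b c d sg l r t Hs).
        exists (ex_RInt_Reals_0 _ _ _ (ex_intro _ _ His)).
        rewrite <- RInt_Reals. apply is_RInt_unique. exact His.
      * exists (@continuity_implies_RiemannInt _ _ _ Hab (fun t _ => HcG _ _ _ _ _ t)).
        rewrite <- RInt_Reals. reflexivity.
    + exists (@continuity_implies_RiemannInt _ _ _ Hab (fun t _ => HcW t)).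
      rewrite <- RInt_Reals. reflexivity.
  - intros eps Heps.
    destruct Hasy as [K [q0 [V [Hq0 [HK Hasy]]]]].
    pose (X := Rabs c + Rabs d + (Rabs sg + 1) * b + 1).
    assert (EX : X = Rabs c + Rabs d + (Rabs sg + 1) * b + 1) by reflexivity. clearbody X.
    pose proof (Rabs_pos c). pose proof (Rabs_pos d). pose proof (Rabs_pos sg).
    destruct Hg as [Hc0 [Hcx [Hct [Hdx Hdt]]]] eqn:Hgg.
    destruct (box_bound phi Hc0 a b (- X) X Hab ltac:(nra)) as [M HM].
    destruct (box_bound fx Hcx a b (- X) X Hab ltac:(nra)) as [M1 HM1].
    assert (HM0 : 0 <= M) by (apply Rle_trans with (Rabs (phi a 0)); [apply Rabs_pos| apply HM; nra]).
    assert (HM10 : 0 <= M1) by (apply Rle_trans with (Rabs (fx a 0)); [apply Rabs_pos| apply HM1; nra]).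
    assert (HV : 0 <= V).
    { (* V bounds something only if e1 exists; choose a witness *)
      pose (e := Rmin (e0 / 2) ((q0 / 2) * (q0 / 2))).
      assert (He : 0 < e < e0) by (unfold e; split; [apply Rmin_glb_lt; nra| apply Rle_lt_trans with (e0 / 2); [apply Rmin_l| lra]]).
      assert (sqrt e < q0).
      { apply sqrt_lt_of; [lra| auto|]. unfold e. apply Rle_lt_trans with ((q0 / 2) * (q0 / 2)); [apply Rmin_r| nra]. }
      destruct (Hasy e He H2) as [_ [_ [_ [_ HVe]]]]. pose proof (Rabs_pos (m e * (s2 e - s1 e))). lra. }
    pose (C := (b - a) * ((Rabs l + Rabs r) * M * b * K + K * b * M + V * b * b * M1 * K) + 1).
    assert (EC : C = (b - a) * ((Rabs l + Rabs r) * M * b * K + K * b * M + V * b * b * M1 * K) + 1) by reflexivity.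
    clearbody C.
    pose proof (Rabs_pos l). pose proof (Rabs_pos r).
    assert (HC : 1 <= C).
    { rewrite EC. assert (0 <= (Rabs l + Rabs r) * M * b * K + K * b * M + V * b * b * M1 * K).
      { assert (0 <= b) by lra.
        repeat apply Rplus_le_le_0_compat; repeat apply Rmult_le_pos; lra. }
      assert (0 <= b - a) by lra. nra. }
    pose (q1 := Rmin q0 (Rmin (eps / C) (1 / (K + 1)))).
    assert (Hq1 : 0 < q1).
    { unfold q1. apply Rmin_glb_lt; auto. apply Rmin_glb_lt; apply Rdiv_lt_0_compat; lra. }
    assert (Hq1a : q1 <= q0) by apply Rmin_l.
    assert (Hq1b : q1 <= eps / C) by (eapply Rle_trans; [apply Rmin_r| apply Rmin_l]).
    assert (Hq1c : q1 <= 1 / (K + 1)) by (eapply Rle_trans; [apply Rmin_r| apply Rmin_r]).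
    clearbody q1.
    exists (q1 * q1). split; [nra|].
    intros e1 He1.
    assert (He1a : 0 < e1 < e0) by (split; [lra| apply Rlt_le_trans with (1 := proj2 He1); apply Rmin_r]).
    assert (Hq : sqrt e1 < q1) by (apply sqrt_lt_of; [lra| auto| apply Rlt_le_trans with (1 := proj2 He1); apply Rmin_l]).
    pose proof (sqrt_pos e1) as Hq0'.
    destruct (Hasy e1 He1a ltac:(lra)) as [H12 [Hs1 [Hs2 [HWm HVm]]]].
    set (q := sqrt e1) in *. clearbody q.
    assert (HKq : K * q <= 1).
    { apply Rle_trans with (K * (1 / (K + 1))). apply Rmult_le_compat_l; lra.
      apply Rmult_le_reg_r with (K + 1); [lra|]. unfold Rdiv. rewrite Rmult_assoc, Rmult_assoc, Rinv_l by lra. lra. }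
    set (Gf := Gform phi c d (s1 e1) (s2 e1) l (m e1) r).
    set (Gg := Gform phi c d sg sg l 0 r).
    set (Wp := fun t => W * t * phi t (sg * t)).
    assert (EI : @eq R (RInt (fun t => Gf t - Gg t - Wp t) a b) (RInt Gf a b - (RInt Gg a b + RInt Wp a b))).
    { apply is_RInt_unique.
      apply (is_RInt_ext (V:=R_NormedModule)) with (fun t => minus (minus (Gf t) (Gg t)) (Wp t)).
      { intros; reflexivity. }
      replace (RInt Gf a b - (RInt Gg a b + RInt Wp a b)) with (minus (minus (RInt Gf a b) (RInt Gg a b)) (RInt Wp a b))
        by (change minus with Rminus; lra).
      apply (is_RInt_minus (V:=R_NormedModule)); [apply (is_RInt_minus (V:=R_NormedModule))|];
        apply (RInt_correct (V:=R_CompleteNormedModule)); unfold Gf, Gg, Wp; auto. }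
    rewrite <- EI.
    assert (Hbox : forall s t, Rabs (s - sg) <= 1 -> a <= t <= b -> - X <= s * t <= X).
    { intros s0 t Hs0 Ht. apply absle1. rewrite Rabs_mult, (Rabs_right t) by lra.
      assert (Rabs s0 <= Rabs sg + 1).
      { replace s0 with ((s0 - sg) + sg) by ring. eapply Rle_trans; [apply Rabs_triang| lra]. }
      rewrite EX. pose proof (Rabs_pos s0). nra. }
    assert (Hs1' : Rabs (s1 e1 - sg) <= 1) by lra.
    assert (Hs2' : Rabs (s2 e1 - sg) <= 1) by lra.
    assert (Hsg' : Rabs (sg - sg) <= 1) by (rewrite Rminus_diag, Rabs_R0; lra).
    apply Rle_lt_trans with ((b - a) * ((Rabs l + Rabs r) * M * b * (K * q) + (K * q) * b * M + V * b * b * M1 * (K * q))).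
    { apply abs_RInt_le_const; auto.
      - apply (ex_RInt_minus (V:=R_NormedModule)); [apply (ex_RInt_minus (V:=R_NormedModule))|]; unfold Gf, Gg, Wp; auto.
      - intros t Ht.
        assert (Hest := est_pt phi fx ft c d l (m e1) r (s1 e1) (s2 e1) sg W (K * q) (K * q) V M M1 X t Hg H12 ltac:(lra)
          Hs1 Hs2 HWm HVm (fun x Hx => HM t x Ht Hx) (fun x Hx => HM1 t x Ht Hx)
          (Hbox _ _ Hs1' Ht) (Hbox _ _ Hs2' Ht) (Hbox _ _ Hsg' Ht)).
        eapply Rle_trans; [exact Hest|].
        assert (0 <= K * q) by nra.
        assert (0 <= (Rabs l + Rabs r) * M) by nra.
        assert (0 <= V * M1 * (K * q)) by (repeat apply Rmult_le_pos; lra).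
        assert (0 <= t <= b) by lra.
        apply Rplus_le_compat; [apply Rplus_le_compat|].
        + replace ((Rabs l + Rabs r) * M * t * (K * q)) with (((Rabs l + Rabs r) * M) * (K * q) * t) by ring.
          replace ((Rabs l + Rabs r) * M * b * (K * q)) with (((Rabs l + Rabs r) * M) * (K * q) * b) by ring.
          apply Rmult_le_compat_l; [nra| lra].
        + replace (K * q * t * M) with ((K * q * M) * t) by ring.
          replace (K * q * b * M) with ((K * q * M) * b) by ring.
          apply Rmult_le_compat_l; [nra| lra].
        + replace (V * t * t * M1 * (K * q)) with ((V * M1 * (K * q)) * (t * t)) by ring.
          replace (V * b * b * M1 * (K * q)) with ((V * M1 * (K * q)) * (b * b)) by ring.
          apply Rmult_le_compat_l; [lra| nra]. }
    replace ((b - a) * ((Rabs l + Rabs r) * M * b * (K * q) + K * q * b * M + V * b * b * M1 * (K * q)))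
      with (q * (C - 1)) by (rewrite EC; ring).
    assert (q * C < eps).
    { apply Rlt_le_trans with (q1 * C). apply Rmult_lt_compat_r; lra.
      apply Rle_trans with (eps / C * C). apply Rmult_le_compat_r; lra.
      unfold Rdiv. rewrite Rmult_assoc, Rinv_l by lra. lra. }
    nra.
Qed.

Theorem theorem6p1 (e2 um vm up vp : R) :
  0 < e2 -> 0 < vm -> 0 < vp -> up < um - 2 * e2 ->
  (exists e0, 0 < e0 /\ forall e1, 0 < e1 < e0 ->
      exists us vs, two_shock e1 e2 um vm up vp us vs) /\
  (forall (e0 : R) (us vs : R -> R), 0 < e0 ->
     (forall e1, 0 < e1 < e0 -> two_shock e1 e2 um vm up vp (us e1) (vs e1)) ->
     let sigma := (um + up) / 2 in
     let w := fun t => (vp * (um - up + 2 * e2) - vm * (up - um + 2 * e2)) / 2 * t in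
     dist_conv e0
       (fun e1 t x => three_state (sigma1 e2 um vm (us e1) (vs e1))
                                  (sigma2 e2 up vp (us e1) (vs e1)) um (us e1) up t x)
       (fun t x => um + (up - um) * H (x - sigma * t)) (fun _ => 0) sigma /\
     dist_conv e0
       (fun e1 t x => three_state (sigma1 e2 um vm (us e1) (vs e1))
                                  (sigma2 e2 up vp (us e1) (vs e1)) vm (vs e1) vp t x)
       (fun t x => vm + (vp - vm) * H (x - sigma * t)) w sigma /\
     (forall eps, 0 < eps -> exists del, 0 < del /\
        forall e1, 0 < e1 < Rmin del e0 -> Rabs (us e1 - (sigma + e2)) < eps)).
Proof.
  intros He2 Hvm Hvp HD. split; [apply existence; auto|].
  intros e0 us vs He0 Hts. cbv zeta.
  destruct (asym e2 um vm up vp He2 Hvm Hvp HD) as [K [q0 [HK [Hq0 Hasy]]]].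
  assert (HWc : 0 < Wc e2 um vm up vp) by (unfold Wc; nra).
  pose (q2 := Rmin q0 (Wc e2 um vm up vp / (K + 1))).
  assert (Hq2 : 0 < q2) by (unfold q2; apply Rmin_glb_lt; [lra| apply Rdiv_lt_0_compat; lra]).
  assert (Hq2a : q2 <= q0) by apply Rmin_l.
  assert (Hq2b : K * q2 < Wc e2 um vm up vp).
  { apply Rle_lt_trans with (K * (Wc e2 um vm up vp / (K + 1))). apply Rmult_le_compat_l; [lra| apply Rmin_r].
    apply Rmult_lt_reg_r with (K + 1); [lra|]. unfold Rdiv. rewrite Rmult_assoc, Rmult_assoc, Rinv_l by lra. nra. }
  clearbody q2.
  assert (Hsm : forall e1, 0 < e1 < e0 -> sqrt e1 < q2 ->
     sigma1 e2 um vm (us e1) (vs e1) <= sigma2 e2 up vp (us e1) (vs e1)).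
  { intros e1 He1 Hq. destruct (Hasy e1 (us e1) (vs e1) (proj1 He1) ltac:(lra) (Hts e1 He1)) as [_ [_ [_ [H4 H5]]]].
    apply absle1 in H4. pose proof (sqrt_pos e1).
    assert (K * sqrt e1 <= K * q2) by (apply Rmult_le_compat_l; lra).
    assert (0 < vs e1 * (sigma2 e2 up vp (us e1) (vs e1) - sigma1 e2 um vm (us e1) (vs e1))) by lra.
    assert (0 < sigma2 e2 up vp (us e1) (vs e1) - sigma1 e2 um vm (us e1) (vs e1)).
    { apply Rmult_lt_reg_l with (vs e1); lra. }
    lra. }
  split; [|split].
  - pose (Ku := K + (Rabs ((um + up) / 2 + e2) + K * q0) * (2 * K)).
    assert (HKu : 0 <= Ku) by (unfold Ku; pose proof (Rabs_pos ((um + up) / 2 + e2)); apply Rplus_le_le_0_compat; [lra|]; apply Rmult_le_pos; nra).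
    apply (conv_general e0 (fun e => sigma1 e2 um vm (us e) (vs e)) (fun e => sigma2 e2 up vp (us e) (vs e)) us
             um up ((um + up) / 2) 0 (fun _ => 0) He0).
    { intros; ring. }
    exists Ku, q2, (Ku * q0). split; [lra|]. split; [lra|].
    intros e1 He1 Hq. pose proof (sqrt_pos e1).
    destruct (Hasy e1 (us e1) (vs e1) (proj1 He1) ltac:(lra) (Hts e1 He1)) as [H1 [H2 [H3 [H4 H5]]]].
    assert (Hb : Rabs (us e1 * (sigma2 e2 up vp (us e1) (vs e1) - sigma1 e2 um vm (us e1) (vs e1)) - 0) <= Ku * sqrt e1).
    { rewrite Rminus_0_r, Rabs_mult.
      assert (Rabs (us e1) <= Rabs ((um + up) / 2 + e2) + K * q0).
      { replace (us e1) with ((us e1 - ((um + up) / 2 + e2)) + ((um + up) / 2 + e2)) by ring.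
        eapply Rle_trans; [apply Rabs_triang|].
        assert (K * sqrt e1 <= K * q0) by (apply Rmult_le_compat_l; lra). lra. }
      assert (Rabs (sigma2 e2 up vp (us e1) (vs e1) - sigma1 e2 um vm (us e1) (vs e1)) <= 2 * K * sqrt e1).
      { replace (sigma2 e2 up vp (us e1) (vs e1) - sigma1 e2 um vm (us e1) (vs e1))
          with ((sigma2 e2 up vp (us e1) (vs e1) - (um + up) / 2) - (sigma1 e2 um vm (us e1) (vs e1) - (um + up) / 2)) by ring.
        eapply Rle_trans; [apply Rabs_triang|]. rewrite Rabs_Ropp. lra. }
      unfold Ku. pose proof (Rabs_pos (us e1)). pose proof (Rabs_pos (sigma2 e2 up vp (us e1) (vs e1) - sigma1 e2 um vm (us e1) (vs e1))).
      assert (0 <= K * sqrt e1) by nra.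
      apply Rle_trans with ((Rabs ((um + up) / 2 + e2) + K * q0) * (2 * K * sqrt e1)).
      + apply Rmult_le_compat; auto.
      + nra. }
    repeat split; auto.
    + apply Rle_trans with (K * sqrt e1); auto. apply Rmult_le_compat_r; [lra|]. unfold Ku.
      pose proof (Rabs_pos ((um + up) / 2 + e2)). nra.
    + apply Rle_trans with (K * sqrt e1); auto. apply Rmult_le_compat_r; [lra|]. unfold Ku.
      pose proof (Rabs_pos ((um + up) / 2 + e2)). nra.
    + rewrite Rminus_0_r in Hb. apply Rle_trans with (Ku * sqrt e1); auto. apply Rmult_le_compat_l; lra.
  - apply (conv_general e0 (fun e => sigma1 e2 um vm (us e) (vs e)) (fun e => sigma2 e2 up vp (us e) (vs e)) vs
             vm vp ((um + up) / 2) (Wc e2 um vm up vp) _ He0).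
    { intros; unfold Wc; reflexivity. }
    exists K, q2, (Wc e2 um vm up vp + K * q0). split; [lra|]. split; [lra|].
    intros e1 He1 Hq. pose proof (sqrt_pos e1).
    destruct (Hasy e1 (us e1) (vs e1) (proj1 He1) ltac:(lra) (Hts e1 He1)) as [H1 [H2 [H3 [H4 H5]]]].
    repeat split; auto.
    replace (vs e1 * (sigma2 e2 up vp (us e1) (vs e1) - sigma1 e2 um vm (us e1) (vs e1)))
      with ((vs e1 * (sigma2 e2 up vp (us e1) (vs e1) - sigma1 e2 um vm (us e1) (vs e1)) - Wc e2 um vm up vp) + Wc e2 um vm up vp) by ring.
    eapply Rle_trans; [apply Rabs_triang|]. rewrite (Rabs_right (Wc e2 um vm up vp)) by lra.
    assert (K * sqrt e1 <= K * q0) by (apply Rmult_le_compat_l; lra). lra.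
  - intros eps Heps.
    pose (q3 := Rmin q0 (eps / (K + 1))).
    assert (Hq3 : 0 < q3) by (unfold q3; apply Rmin_glb_lt; [lra| apply Rdiv_lt_0_compat; lra]).
    assert (Hq3a : q3 <= q0) by apply Rmin_l.
    assert (Hq3b : K * q3 < eps).
    { apply Rle_lt_trans with (K * (eps / (K + 1))). apply Rmult_le_compat_l; [lra| apply Rmin_r].
      apply Rmult_lt_reg_r with (K + 1); [lra|]. unfold Rdiv. rewrite Rmult_assoc, Rmult_assoc, Rinv_l by lra. nra. }
    clearbody q3.
    exists (q3 * q3). split; [nra|]. intros e1 He1.
    assert (He1a : 0 < e1 < e0) by (split; [lra| apply Rlt_le_trans with (1 := proj2 He1); apply Rmin_r]).
    assert (Hq : sqrt e1 < q3) by (apply sqrt_lt_of; [lra| auto| apply Rlt_le_trans with (1 := proj2 He1); apply Rmin_l]).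
    pose proof (sqrt_pos e1).
    destruct (Hasy e1 (us e1) (vs e1) (proj1 He1a) ltac:(lra) (Hts e1 He1a)) as [H1 _].
    assert (K * sqrt e1 <= K * q3) by (apply Rmult_le_compat_l; lra). lra.
Qed.
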